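(* For a semiring $(S,+,\cdot)$ the following are equivalent: (i) $S$ is a b-lattice of nil-extensions of left skew-rings and $E^+(S)$ is a subsemigroup of $(S,+)$; (ii) $S$ is a quasi completely regular semiring and $e+f=e+f+e$ for all $e,f\in E^+(S)$.
   Context: A semiring $(S,+,\cdot)$ has two associative operations with $a(b+c)=ab+ac$, $(b+c)a=ba+ca$. $na$ is the $n$-fold sum of $a$. $E^+(S)$ is the set of additive idempotents. $a$ is completely regular if there is $x$ with $a=a+x+a$, $a+x=x+a$, $a(a+x)=a+x$; $S$ is quasi completely regular if for each $a\in S$ some $na$ is completely regular. A skew-ring is a semiring whose additive reduct is a (not necessarily commutative) group. A left zero semiring is a semiring with $(S,\cdot)$ a band and $(S,+)$ a left zero band ($a+b=a$ for all $a,b$). A left skew-ring is a semiring isomorphic to a direct product (componentwise operations) of a left zero semiring and a skew-ring. $S$ is a nil-extension of a subsemiring $K$ if $K$ is a bi-ideal ($a\in K,x\in S\Rightarrow a+x,x+a,ax,xa\in K$) and every $a\in S$ has some $na\in K$. A b-lattice is a semiring with $(S,\cdot)$ a band and $(S,+)$ a semilattice; $S$ is a b-lattice of semirings of a class if there is a congruence $\rho$ on $S$ with $S/\rho$ a b-lattice and each $\rho$-class a subsemiring in that class. *)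

(* Defs.v *)
Definition is_semiring {S : Type} (add mul : S -> S -> S) : Prop :=
  (forall a b c, add a (add b c) = add (add a b) c) /\
  (forall a b c, mul a (mul b c) = mul (mul a b) c) /\
  (forall a b c, mul a (add b c) = add (mul a b) (mul a c)) /\
  (forall a b c, mul (add b c) a = add (mul b a) (mul c a)).

(** [ntimes add n a] is the (n+1)-fold sum a + ... + a. *)
Fixpoint ntimes {S : Type} (add : S -> S -> S) (n : nat) (a : S) : S :=
  match n with
  | O => a
  | Datatypes.S m => add (ntimes add m a) a
  end.

(** [nsum add n a] = n a  (the n-fold sum), meaningful for n >= 1. *)
Definition nsum {S : Type} (add : S -> S -> S) (n : nat) (a : S) : S :=
  ntimes add (Nat.pred n) a.

Definition add_idem {S : Type} (add : S -> S -> S) (e : S) : Prop := add e e = e.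

Definition completely_regular {S : Type} (add mul : S -> S -> S) (a : S) : Prop :=
  exists x, a = add (add a x) a /\ add a x = add x a /\ mul a (add a x) = add a x.

Definition quasi_completely_regular {S : Type} (add mul : S -> S -> S) : Prop :=
  forall a, exists n, 1 <= n /\ completely_regular add mul (nsum add n a).

Definition is_skew_ring {S : Type} (add mul : S -> S -> S) : Prop :=
  is_semiring add mul /\
  exists z : S, (forall a, add z a = a /\ add a z = a) /\
                (forall a, exists b, add a b = z /\ add b a = z).

Definition is_left_zero_semiring {S : Type} (add mul : S -> S -> S) : Prop :=
  is_semiring add mul /\ (forall a, mul a a = a) /\ (forall a b, add a b = a).

Definition subsemiring {S : Type} (add mul : S -> S -> S) (K : S -> Prop) : Prop :=
  forall a b, K a -> K b -> K (add a b) /\ K (mul a b).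

(** The subsemiring K (of S) is a left skew-ring: it is isomorphic to the direct
    product (componentwise operations) of a left zero semiring L and a skew-ring G. *)
Definition is_left_skew_ring_on {S : Type} (add mul : S -> S -> S) (K : S -> Prop)
  : Prop :=
  exists (L G : Type) (addL mulL : L -> L -> L) (addG mulG : G -> G -> G)
         (f : L * G -> S),
    is_left_zero_semiring addL mulL /\
    is_skew_ring addG mulG /\
    (forall p, K (f p)) /\
    (forall p q, f p = f q -> p = q) /\
    (forall y, K y -> exists p, f p = y) /\
    (forall p q, f (addL (fst p) (fst q), addG (snd p) (snd q)) = add (f p) (f q)) /\
    (forall p q, f (mulL (fst p) (fst q), mulG (snd p) (snd q)) = mul (f p) (f q)).

Definition is_nil_ext_of_left_skew_ring_on {S : Type} (add mul : S -> S -> S)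
  (C : S -> Prop) : Prop :=
  exists K : S -> Prop,
    (forall a, K a -> C a) /\
    subsemiring add mul K /\
    (forall a x, K a -> C x ->
       K (add a x) /\ K (add x a) /\ K (mul a x) /\ K (mul x a)) /\
    (forall a, C a -> exists n, 1 <= n /\ K (nsum add n a)) /\
    is_left_skew_ring_on add mul K.

Definition congruence {S : Type} (add mul : S -> S -> S) (rho : S -> S -> Prop)
  : Prop :=
  (forall a, rho a a) /\ (forall a b, rho a b -> rho b a) /\
  (forall a b c, rho a b -> rho b c -> rho a c) /\
  (forall a b c d, rho a b -> rho c d -> rho (add a c) (add b d) /\ rho (mul a c) (mul b d)).

(** S/rho is a b-lattice: (S/rho,.) a band and (S/rho,+) a semilattice
    (associativity is inherited from S). *)
Definition quotient_is_b_lattice {S : Type} (add mul : S -> S -> S)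
  (rho : S -> S -> Prop) : Prop :=
  (forall a, rho (mul a a) a) /\ (forall a, rho (add a a) a) /\
  (forall a b, rho (add a b) (add b a)).

Definition b_lattice_of_nil_ext_left_skew_rings {S : Type} (add mul : S -> S -> S)
  : Prop :=
  exists rho : S -> S -> Prop,
    congruence add mul rho /\
    quotient_is_b_lattice add mul rho /\
    (forall x, subsemiring add mul (rho x) /\
               is_nil_ext_of_left_skew_ring_on add mul (rho x)).

(* Main.v *)
Require Import Defs.
From Stdlib Require Import ProofIrrelevance Setoid.

Lemma ntimes_idem {S} (add : S -> S -> S) e k : add e e = e -> ntimes add k e = e.
Proof. intros H; induction k; simpl; auto. rewrite IHk; auto. Qed.

Lemma ntimes_comm {S} (add : S -> S -> S) (A : forall a b c, add a (add b c) = add (add a b) c) k p :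
  add (ntimes add k p) p = add p (ntimes add k p).
Proof. induction k; simpl; auto. rewrite IHk at 1. rewrite <- A. reflexivity. Qed.

Definition ing {S} (add : S -> S -> S) g u :=
  add g u = u /\ add u g = u /\ exists v, add u v = g /\ add v u = g.

Definition sim {S} (add : S -> S -> S) e f := add e f = e /\ add f e = f.

Section Core.
Variable S : Type.
Variables add mul : S -> S -> S.
Local Infix "⊕" := add (at level 50, left associativity).
Local Infix "⊗" := mul (at level 40, left associativity).
Hypothesis A : forall a b c, a ⊕ (b ⊕ c) = a ⊕ b ⊕ c.
Hypothesis M : forall a b c, a ⊗ (b ⊗ c) = a ⊗ b ⊗ c.
Hypothesis Dl : forall a b c, a ⊗ (b ⊕ c) = a ⊗ b ⊕ a ⊗ c.
Hypothesis Dr : forall a b c, (b ⊕ c) ⊗ a = b ⊗ a ⊕ c ⊗ a.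

Lemma ing_idem g u : ing add g u -> g ⊕ g = g.
Proof. intros [H1 [H2 [v [H3 H4]]]]. rewrite <- H3 at 2. rewrite A, H1, H3. reflexivity. Qed.

Lemma ing_inv e u : ing add e u -> exists v, ing add e v /\ u ⊕ v = e /\ v ⊕ u = e.
Proof.
  intros H. assert (Hi := ing_idem _ _ H). destruct H as [H1 [H2 [v [H3 H4]]]].
  exists (e ⊕ v ⊕ e). repeat split.
  - rewrite !A, Hi. reflexivity.
  - rewrite <- !A, Hi. reflexivity.
  - exists u. split.
    + rewrite <- !A, H1, H4, Hi. reflexivity.
    + rewrite !A, H2, H3, Hi. reflexivity.
  - rewrite !A, H2, H3, Hi. reflexivity.
  - rewrite <- !A, H1, H4, Hi. reflexivity.
Qed.

Lemma idem_mul_l e a : e ⊕ e = e -> e ⊗ a ⊕ e ⊗ a = e ⊗ a.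
Proof. intros H. rewrite <- Dr, H. reflexivity. Qed.
Lemma idem_mul_r e a : e ⊕ e = e -> a ⊗ e ⊕ a ⊗ e = a ⊗ e.
Proof. intros H. rewrite <- Dl, H. reflexivity. Qed.

Lemma ntimes_mul_l e k a : e ⊗ ntimes add k a = ntimes add k (e ⊗ a).
Proof. induction k; simpl; auto. rewrite Dl, IHk. reflexivity. Qed.
Lemma ntimes_mul_r e k a : ntimes add k a ⊗ e = ntimes add k (a ⊗ e).
Proof. induction k; simpl; auto. rewrite Dr, IHk. reflexivity. Qed.

Lemma L2l e g u : e ⊕ e = e -> ing add g u -> e ⊗ u = e ⊗ g.
Proof.
  intros He [H1 [H2 [v [H3 H4]]]].
  assert (E1 : e ⊗ g = e ⊗ u ⊕ e ⊗ v) by (rewrite <- H3, Dl; reflexivity).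
  assert (E2 : e ⊗ u = e ⊗ u ⊕ e ⊗ g) by (rewrite <- Dl, H2; reflexivity).
  rewrite E2 at 1. rewrite E1, A, idem_mul_l by auto. reflexivity.
Qed.

Lemma L2r e g u : e ⊕ e = e -> ing add g u -> u ⊗ e = g ⊗ e.
Proof.
  intros He [H1 [H2 [v [H3 H4]]]].
  assert (E1 : g ⊗ e = u ⊗ e ⊕ v ⊗ e) by (rewrite <- H3, Dr; reflexivity).
  assert (E2 : u ⊗ e = u ⊗ e ⊕ g ⊗ e) by (rewrite <- Dr, H2; reflexivity).
  rewrite E2 at 1. rewrite E1, A, idem_mul_r by auto. reflexivity.
Qed.

Lemma uniq_id g e : e ⊕ e = e -> ing add g e -> g = e.
Proof.
  intros He [H1 [H2 [v [H3 H4]]]]. rewrite <- H3. rewrite <- He at 1.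
  rewrite <- A, H3. exact H2.
Qed.

Lemma lemP e q p k : ing add e q -> q = ntimes add k p -> (e ⊕ p = p \/ p ⊕ e = p) -> ing add e p.
Proof.
  intros Hq Hk Hor.
  assert (He := ing_idem _ _ Hq).
  destruct (ing_inv _ _ Hq) as [q' [Hq' [Hqq Hq'q]]].
  destruct Hq as [Q1 [Q2 _]].
  assert (Cm : q ⊕ p = p ⊕ q) by (subst q; apply ntimes_comm; auto).
  set (r := q ⊕ p).
  assert (R1 : e ⊕ r = r) by (unfold r; rewrite A, Q1; reflexivity).
  assert (R2 : r ⊕ e = r) by (unfold r; rewrite Cm, <- A, Q2; reflexivity).
  assert (C2 : q' ⊕ r = r ⊕ q').
  { rewrite <- R2 at 1. rewrite <- Hqq. rewrite !A.
    assert (H : q' ⊕ r ⊕ q = q' ⊕ q ⊕ r).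
    { unfold r. rewrite <- !A. rewrite Cm. reflexivity. }
    rewrite H, Hq'q, R1. reflexivity. }
  assert (EP : e ⊕ p = p ⊕ e).
  { transitivity (q' ⊕ r). { unfold r. rewrite A, Hq'q. reflexivity. }
    rewrite C2. unfold r. rewrite Cm, <- A, Hqq. reflexivity. }
  assert (P1 : e ⊕ p = p /\ p ⊕ e = p) by (destruct Hor; split; congruence).
  destruct P1 as [P1 P2].
  assert (Cq : p ⊕ q' = q' ⊕ p).
  { assert (H : q' ⊕ (p ⊕ q) ⊕ q' = q' ⊕ (q ⊕ p) ⊕ q') by (rewrite Cm; reflexivity).
    rewrite !A in H. rewrite Hq'q in H. rewrite <- (A (q' ⊕ p)), Hqq in H.
    rewrite P1 in H. rewrite <- A, P2 in H. symmetry; exact H. }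
  destruct k as [|j].
  - simpl in Hk. subst q. repeat split; auto. exists q'. auto.
  - repeat split; auto. exists (q' ⊕ ntimes add j p). split.
    + rewrite A, Cq, <- A. rewrite <- ntimes_comm by auto. simpl in Hk. rewrite <- Hk. exact Hq'q.
    + rewrite <- A. simpl in Hk. rewrite <- Hk. exact Hq'q.
Qed.


Section Ofun.
Variable o : S -> S.
Hypothesis Ho1 : forall a, o a ⊕ o a = o a.
Hypothesis Ho2 : forall a, exists k, ing add (o a) (ntimes add k a).
Hypothesis Ho3 : forall a, a ⊗ o a = o a.
Hypothesis Hlr : forall e f, e ⊕ e = e -> f ⊕ f = f -> e ⊕ f = e ⊕ f ⊕ e.

Lemma clo e f : e ⊕ e = e -> f ⊕ f = f -> e ⊕ f ⊕ (e ⊕ f) = e ⊕ f.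
Proof. intros He Hf. rewrite A. rewrite <- Hlr by auto. rewrite <- A, Hf. reflexivity. Qed.

Lemma R1 e a : e ⊕ e = e -> e ⊗ a = e ⊗ o a.
Proof.
  intros He. destruct (Ho2 a) as [k Hk].
  rewrite <- (L2l _ _ _ He Hk), ntimes_mul_l, ntimes_idem; auto. apply idem_mul_l; auto.
Qed.

Lemma R2 e a : e ⊕ e = e -> a ⊗ e = o a ⊗ e.
Proof.
  intros He. destruct (Ho2 a) as [k Hk].
  rewrite <- (L2r _ _ _ He Hk), ntimes_mul_r, ntimes_idem; auto. apply idem_mul_r; auto.
Qed.

Lemma o_fix e : e ⊕ e = e -> o e = e.
Proof.
  intros He. destruct (Ho2 e) as [k Hk]. rewrite ntimes_idem in Hk by auto.
  apply uniq_id; auto.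
Qed.

Lemma mul_idem e : e ⊕ e = e -> e ⊗ e = e.
Proof. intros He. transitivity (e ⊗ o e). { rewrite o_fix; auto. } rewrite Ho3. apply o_fix; auto. Qed.

Lemma U g u : ing add g u -> o u = g.
Proof.
  intros H. assert (Hg := ing_idem _ _ H).
  rewrite <- Ho3. rewrite (L2r _ _ _ (Ho1 u) H).
  rewrite <- R1 by auto. rewrite (L2l _ _ _ Hg H). apply mul_idem; auto.
Qed.

Lemma o_add a b : o (a ⊕ b) = o a ⊕ o b.
Proof.
  set (h := o a ⊕ o b).
  assert (Hh : h ⊕ h = h) by (apply clo; auto).
  assert (E1 : o (a ⊕ b) = h ⊗ o (a ⊕ b)).
  { rewrite <- (Ho3 (a ⊕ b)) at 1. rewrite Dr. unfold h. rewrite Dr.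
    rewrite <- (R2 _ a), <- (R2 _ b); auto. }
  assert (E2 : h ⊗ (a ⊕ b) = h).
  { rewrite Dl, (R1 _ a), (R1 _ b) by auto. rewrite <- Dl. apply mul_idem; auto. }
  rewrite E1, <- R1 by auto. exact E2.
Qed.

Lemma o_mul a b : o (a ⊗ b) = o a ⊗ o b.
Proof.
  set (h := o a ⊗ o b).
  assert (Hh : h ⊕ h = h) by (apply idem_mul_l; auto).
  assert (E1 : o (a ⊗ b) = h ⊗ o (a ⊗ b)).
  { rewrite <- (Ho3 (a ⊗ b)) at 1. rewrite <- M. rewrite (R2 _ b) by auto.
    rewrite (R2 _ a). unfold h. rewrite M. reflexivity. apply idem_mul_l; auto. }
  assert (E2 : h ⊗ (a ⊗ b) = h).
  { rewrite M, (R1 _ a) by auto. rewrite (R1 _ b). rewrite <- M. fold h. apply mul_idem; auto.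
    apply idem_mul_l; auto. }
  rewrite E1, <- R1 by auto. exact E2.
Qed.

Lemma o_ntimes k a : o (ntimes add k a) = o a.
Proof. induction k; simpl; auto. rewrite o_add, IHk. auto. Qed.

Lemma Nlem p : (o p ⊕ p = p \/ p ⊕ o p = p) -> ing add (o p) p.
Proof. intros H. destruct (Ho2 p) as [k Hk]. eapply lemP; eauto. Qed.

Lemma Gmul_l e u s : ing add e u -> ing add (e ⊗ o s) (u ⊗ s).
Proof.
  intros H. assert (He := ing_idem _ _ H). rewrite <- R1 by auto.
  destruct H as [H1 [H2 [v [H3 H4]]]]. repeat split.
  - rewrite <- Dr, H1. reflexivity.
  - rewrite <- Dr, H2. reflexivity.
  - exists (v ⊗ s). split; rewrite <- Dr; congruence.
Qed.

Lemma Gmul_r e u s : ing add e u -> ing add (o s ⊗ e) (s ⊗ u).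
Proof.
  intros H. assert (He := ing_idem _ _ H). rewrite <- R2 by auto.
  destruct H as [H1 [H2 [v [H3 H4]]]]. repeat split.
  - rewrite <- Dl, H1. reflexivity.
  - rewrite <- Dl, H2. reflexivity.
  - exists (s ⊗ v). split; rewrite <- Dl; congruence.
Qed.

Lemma sim_sym e f : sim add e f -> sim add f e.
Proof. unfold sim; tauto. Qed.
Lemma sim_trans e f g : sim add e f -> sim add f g -> sim add e g.
Proof.
  intros [H1 H2] [H3 H4]. split.
  - rewrite <- H1 at 1. rewrite <- A, H3. exact H1.
  - rewrite <- H4 at 1. rewrite <- A, H2. exact H4.
Qed.
Lemma sim_mul e e' f f' : sim add e e' -> sim add f f' -> sim add (e ⊗ f) (e' ⊗ f').
Proof.
  intros [H1 H2] [H3 H4]. apply sim_trans with (e' ⊗ f).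
  - split; rewrite <- Dr; congruence.
  - split; rewrite <- Dl; congruence.
Qed.
Lemma sim_add_half e e' f : e ⊕ e = e -> e' ⊕ e' = e' -> f ⊕ f = f ->
  e ⊕ e' = e -> e ⊕ f ⊕ e' = e ⊕ f.
Proof.
  intros He He' Hf H. rewrite <- H at 1. rewrite <- !A. rewrite (A e' f e'), <- Hlr by auto.
  rewrite A, H. reflexivity.
Qed.
Lemma sim_add e e' f f' : e ⊕ e = e -> e' ⊕ e' = e' -> f ⊕ f = f -> f' ⊕ f' = f' ->
  sim add e e' -> sim add f f' -> sim add (e ⊕ f) (e' ⊕ f').
Proof.
  intros He He' Hf Hf' [H1 H2] [H3 H4]. split.
  - rewrite A, (sim_add_half e e' f) by auto. rewrite <- A, H3. reflexivity.
  - rewrite A, (sim_add_half e' e f') by auto. rewrite <- A, H4. reflexivity.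
Qed.


Lemma sim_cls e0 a b : sim add e0 a -> sim add e0 b -> a ⊕ b = a.
Proof. intros Ha Hb. apply (sim_trans _ _ _ (sim_sym _ _ Ha) Hb). Qed.

Lemma sig_eq (P : S -> Prop) (a b : sig P) : proj1_sig a = proj1_sig b -> a = b.
Proof. destruct a, b; simpl; intro; subst; f_equal; apply proof_irrelevance. Qed.

Lemma sub_class x : subsemiring add mul (fun b => sim add (o x) (o b)).
Proof.
  intros a b Ha Hb. rewrite o_add, o_mul. split.
  - rewrite <- (Ho1 x). apply sim_add; auto.
  - rewrite <- (mul_idem (o x)) by auto. apply sim_mul; auto.
Qed.

Lemma Lmul_ok x l1 l2 : l1 ⊕ l1 = l1 /\ sim add (o x) l1 -> l2 ⊕ l2 = l2 /\ sim add (o x) l2 ->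
  l1 ⊗ l2 ⊕ l1 ⊗ l2 = l1 ⊗ l2 /\ sim add (o x) (l1 ⊗ l2).
Proof.
  intros [H1 S1] [H2 S2]. split. apply idem_mul_l; auto.
  rewrite <- (mul_idem (o x)) by auto. apply sim_mul; auto.
Qed.

Lemma Gadd_ok x g1 g2 : ing add (o x) g1 -> ing add (o x) g2 -> ing add (o x) (g1 ⊕ g2).
Proof.
  intros I1 I2. assert (U1 := U _ _ I1). assert (U2 := U _ _ I2).
  assert (H : ing add (o (g1 ⊕ g2)) (g1 ⊕ g2)).
  { apply Nlem. left. rewrite o_add, U1, U2, Ho1, A. destruct I1 as [J _]. rewrite J. reflexivity. }
  rewrite o_add, U1, U2, Ho1 in H. exact H.
Qed.

Lemma Gmul_ok x g1 g2 : ing add (o x) g1 -> ing add (o x) g2 -> ing add (o x) (g1 ⊗ g2).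
Proof.
  intros I1 I2. assert (U2 := U _ _ I2). assert (H := Gmul_l _ _ g2 I1).
  rewrite U2, mul_idem in H; auto.
Qed.

Lemma G0_ok x : ing add (o x) (o x).
Proof. repeat split; auto. exists (o x); auto. Qed.

Lemma nil_class x : is_nil_ext_of_left_skew_ring_on add mul (fun b => sim add (o x) (o b)).
Proof.
  set (e0 := o x).
  assert (He0 : e0 ⊕ e0 = e0) by apply Ho1.
  assert (SC := sub_class x). fold e0 in SC.
  exists (fun b => sim add e0 (o b) /\ ing add (o b) b).
  split; [intros a [H _]; exact H|].
  split.
  { intros a b [Ha Ia] [Hb Ib]. split; split.
    - apply SC; auto.
    - apply Nlem. left. rewrite o_add, (sim_cls _ _ _ Ha Hb), A. destruct Ia as [J _]. rewrite J. auto.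
    - apply SC; auto.
    - rewrite o_mul. apply Gmul_l; exact Ia. }
  split.
  { intros a y [Ha Ia] Hy. split; [|split; [|split]]; split.
    - apply SC; auto.
    - apply Nlem. left. rewrite o_add, (sim_cls _ _ _ Ha Hy), A. destruct Ia as [J _]. rewrite J. auto.
    - apply SC; auto.
    - apply Nlem. right. rewrite o_add, (sim_cls _ _ _ Hy Ha).
      destruct Ia as [_ [J _]]. rewrite <- J at 1. rewrite <- !A. rewrite (sim_cls _ _ _ Ha Hy).
      rewrite J. reflexivity.
    - apply SC; auto.
    - rewrite o_mul. apply Gmul_l; exact Ia.
    - apply SC; auto.
    - rewrite o_mul. apply Gmul_r; exact Ia. }
  split.
  { intros a Ha. destruct (Ho2 a) as [k Hk]. exists (Datatypes.S k). split.
    - apply le_n_S, le_0_n.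
    - unfold nsum; simpl. rewrite o_ntimes. split; auto. }
  exists {l : S | l ⊕ l = l /\ sim add e0 l}, {g : S | ing add e0 g}.
  exists (fun l1 l2 => l1).
  exists (fun l1 l2 => exist _ (proj1_sig l1 ⊗ proj1_sig l2) (Lmul_ok x _ _ (proj2_sig l1) (proj2_sig l2))).
  exists (fun g1 g2 => exist _ (proj1_sig g1 ⊕ proj1_sig g2) (Gadd_ok x _ _ (proj2_sig g1) (proj2_sig g2))).
  exists (fun g1 g2 => exist _ (proj1_sig g1 ⊗ proj1_sig g2) (Gmul_ok x _ _ (proj2_sig g1) (proj2_sig g2))).
  exists (fun p => proj1_sig (fst p) ⊕ proj1_sig (snd p)).
  split.
  { split; [|split].
    - split; [intros; reflexivity|split; [|split; intros; reflexivity]].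
      intros a b c. apply sig_eq; simpl. apply M.
    - intros [a [Ha Sa]]. apply sig_eq; simpl. apply mul_idem; auto.
    - reflexivity. }
  split.
  { split.
    - split; [|split; [|split]]; intros a b c; apply sig_eq; simpl; auto.
    - exists (exist _ e0 (G0_ok x)). split.
      + intros [a Ia]; split; apply sig_eq; simpl; destruct Ia as [J1 [J2 _]]; auto.
      + intros [a Ia]. destruct (ing_inv _ _ Ia) as [v [Iv [J1 J2]]].
        exists (exist _ v Iv). split; apply sig_eq; simpl; auto. }
  split.
  { intros [[l [Hl Sl]] [g Ig]]; simpl.
    assert (Ug := U _ _ Ig).
    assert (Ol : o (l ⊕ g) = l) by (rewrite o_add, Ug, o_fix by auto; apply Sl).
    split.
    - rewrite Ol; auto.
    - apply Nlem. left. rewrite Ol, A, Hl. reflexivity. }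
  split.
  { intros [[l1 [Hl1 Sl1]] [g1 Ig1]] [[l2 [Hl2 Sl2]] [g2 Ig2]]; simpl. intros E.
    assert (El : l1 = l2).
    { assert (E' := f_equal o E). rewrite !o_add, (U _ _ Ig1), (U _ _ Ig2), !o_fix in E' by auto.
      destruct Sl1 as [_ T1], Sl2 as [_ T2]. congruence. }
    assert (Eg : g1 = g2).
    { assert (E' := f_equal (add e0) E). rewrite !A in E'. destruct Sl1 as [T1 _], Sl2 as [T2 _].
      rewrite T1, T2 in E'. destruct Ig1 as [K1 _], Ig2 as [K2 _]. congruence. }
    f_equal; apply sig_eq; auto. }
  split.
  { intros y [Sy Iy].
    assert (Oe : o e0 = e0) by (apply o_fix; auto).
    assert (Ip : ing add e0 (e0 ⊕ y)).
    { assert (H : ing add (o (e0 ⊕ y)) (e0 ⊕ y)).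
      { apply Nlem. left. rewrite o_add, Oe, (proj1 Sy), A, He0. reflexivity. }
      rewrite o_add, Oe in H. destruct Sy as [T _]. rewrite T in H. exact H. }
    assert (Pl : o y ⊕ o y = o y /\ sim add e0 (o y)) by (split; auto).
    exists (exist _ (o y) Pl, exist _ (e0 ⊕ y) Ip). simpl.
    rewrite A. destruct Sy as [_ T]. rewrite T. destruct Iy as [J _]. exact J. }
  split.
  { intros [[l1 [Hl1 Sl1]] [g1 Ig1]] [[l2 [Hl2 Sl2]] [g2 Ig2]]; simpl.
    assert (H : g1 ⊕ l2 = g1).
    { destruct Ig1 as [_ [J _]]. rewrite <- J at 1. rewrite <- A. destruct Sl2 as [T _]. rewrite T. exact J. }
    rewrite (A (l1 ⊕ g1)), <- (A l1 g1 l2), H. rewrite A. reflexivity. }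
  { intros [[l1 [Hl1 Sl1]] [g1 Ig1]] [[l2 [Hl2 Sl2]] [g2 Ig2]]; simpl.
    rewrite Dl, !Dr.
    rewrite (L2r _ _ _ Hl2 Ig1). rewrite (R1 l1 g2) by auto. rewrite (U _ _ Ig2).
    assert (S0 : sim add e0 e0) by (split; auto).
    assert (Hm : forall a b, sim add e0 a -> sim add e0 b -> sim add e0 (a ⊗ b)).
    { intros a b Ha Hb. rewrite <- (mul_idem e0) by auto. apply sim_mul; auto. }
    rewrite !A. rewrite (sim_cls e0 (l1 ⊗ l2) (e0 ⊗ l2)) by auto.
    rewrite (sim_cls e0 (l1 ⊗ l2) (l1 ⊗ e0)) by auto. reflexivity. }
Qed.


Lemma blat : b_lattice_of_nil_ext_left_skew_rings add mul.
Proof.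
  exists (fun a b => sim add (o a) (o b)).
  split; [split; [|split; [|split]]|split; [split; [|split]|]].
  - intros a; split; apply Ho1.
  - intros a b; apply sim_sym.
  - intros a b c; apply sim_trans.
  - intros a b c d H1 H2. rewrite !o_add, !o_mul. split; [apply sim_add; auto | apply sim_mul; auto].
  - intros a. rewrite o_mul, mul_idem by auto. split; apply Ho1.
  - intros a. rewrite o_add, Ho1. split; apply Ho1.
  - intros a b. rewrite !o_add. split.
    + rewrite A, <- (A (o a) (o b) (o b)), Ho1, <- Hlr by auto. reflexivity.
    + rewrite A, <- (A (o b) (o a) (o a)), Ho1, <- Hlr by auto. reflexivity.
  - intros x. split; [apply sub_class | apply nil_class].
Qed.

End Ofun.
End Core.

Lemma dir1 (S : Type) (add mul : S -> S -> S) :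
  is_semiring add mul ->
  b_lattice_of_nil_ext_left_skew_rings add mul ->
  (forall e f, add_idem add e -> add_idem add f -> add_idem add (add e f)) ->
  quasi_completely_regular add mul /\
    (forall e f, add_idem add e -> add_idem add f -> add e f = add (add e f) e).
Proof.
  intros [A [M [Dl Dr]]] [rho [[Rr [Rs [Rt Rc]]] [[Bm [Ba Bc]] Hcl]]] Hclo.
  split.
  - intro a. destruct (Hcl a) as [_ [K [HKC [HKs [HKb [HKn HK]]]]]].
    destruct (HKn a (Rr a)) as [n [Hn HKa]].
    destruct HK as [L [G [addL [mulL [addG [mulG [F [HL [HG [HFK [HFi [HFs [HFa HFm]]]]]]]]]]]]].
    destruct (HFs _ HKa) as [[l g] Hp].
    destruct HL as [_ [Lb Lz]].
    destruct HG as [[GA [GM [GDl GDr]]] [z [Hz Hinv]]].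
    destruct (Hinv g) as [h [Hgh Hhg]].
    exists n; split; auto.
    exists (F (l, h)).
    assert (E1 : add (nsum add n a) (F (l, h)) = F (l, z)).
    { rewrite <- Hp, <- HFa; simpl. rewrite Lz, Hgh. reflexivity. }
    assert (Hgz : mulG g z = z).
    { assert (H1 : mulG g z = addG (mulG g z) (mulG g z)).
      { rewrite <- GDl. destruct (Hz z) as [H _]. rewrite H. reflexivity. }
      destruct (Hinv (mulG g z)) as [k [Hk _]].
      rewrite <- Hk. rewrite H1 at 2. rewrite <- GA, Hk. destruct (Hz (mulG g z)); auto. }
    split; [|split].
    + rewrite E1, <- Hp, <- HFa; simpl. rewrite Lz. destruct (Hz g) as [H _]. rewrite H. reflexivity.
    + rewrite E1, <- Hp, <- HFa; simpl. rewrite Lz, Hhg. reflexivity.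
    + rewrite E1, <- Hp, <- HFm; simpl. rewrite Lb, Hgz. reflexivity.
  - intros e f He Hf.
    set (g := add e f).
    assert (Hg : add_idem add g) by (apply Hclo; auto).
    assert (Hg' : add_idem add (add g e)) by (apply Hclo; auto).
    assert (Hr : rho g (add g e)).
    { apply Rs. unfold g. rewrite <- A.
      assert (H1 : rho (add e (add f e)) (add e (add e f))) by (apply Rc; auto).
      rewrite (A e e f), He in H1. exact H1. }
    destruct (Hcl g) as [_ [K [HKC [HKs [HKb [HKn HK]]]]]].
    assert (KI : forall x, rho g x -> add_idem add x -> K x).
    { intros x Hx Hix. destruct (HKn x Hx) as [n [_ Hn]]. unfold nsum in Hn.
      rewrite ntimes_idem in Hn; auto. }
    assert (K1 := KI g (Rr g) Hg). assert (K2 := KI _ Hr Hg').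
    destruct HK as [L [G [addL [mulL [addG [mulG [F [HL [HG [HFK [HFi [HFs [HFa HFm]]]]]]]]]]]]].
    destruct HL as [_ [Lb Lz]].
    destruct HG as [[GA [GM [GDl GDr]]] [z [Hz Hinv]]].
    assert (Gz : forall p, add (F p) (F p) = F p -> snd p = z).
    { intros [l h] H. rewrite <- HFa in H. simpl in H. rewrite Lz in H.
      apply HFi in H. injection H as H. simpl.
      destruct (Hinv h) as [k [Hk _]]. rewrite <- Hk. rewrite <- H at 2.
      rewrite <- GA, Hk. destruct (Hz h); auto. }
    destruct (HFs _ K1) as [p1 Hp1]. destruct (HFs _ K2) as [p2 Hp2].
    assert (z1 := Gz p1 ltac:(rewrite Hp1; exact Hg)).
    assert (z2 := Gz p2 ltac:(rewrite Hp2; exact Hg')).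
    assert (H : add g (add g e) = g).
    { rewrite <- Hp1 at 1 3. rewrite <- Hp2, <- HFa. destruct p1 as [l1 h1], p2 as [l2 h2].
      simpl in *. subst. rewrite Lz. destruct (Hz z) as [H _]. rewrite H. reflexivity. }
    rewrite A, Hg in H. fold g. rewrite H. reflexivity.
Qed.

From Stdlib Require Import ClassicalEpsilon.

Theorem theorem3p11 (S : Type) (add mul : S -> S -> S) :
  is_semiring add mul ->
  ((b_lattice_of_nil_ext_left_skew_rings add mul /\
    (forall e f, add_idem add e -> add_idem add f -> add_idem add (add e f)))
   <->
   (quasi_completely_regular add mul /\
    (forall e f, add_idem add e -> add_idem add f ->
       add e f = add (add e f) e))).
Proof.
  intros Hs. split.
  - intros [H1 H2]. apply dir1; auto.
  - intros [Hq Hlr]. destruct Hs as [A [M [Dl Dr]]].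
    assert (Ex : forall a, exists g, add g g = g /\ (exists k, ing add g (ntimes add k a)) /\ mul a g = g).
    { intros a. destruct (Hq a) as [n [Hn [x [E1 [E2 E3]]]]].
      set (b := nsum add n a) in *.
      assert (Ib : ing add (add b x) b).
      { split; [|split].
        - symmetry; exact E1.
        - rewrite E2, A. symmetry. exact E1.
        - exists x. split; auto. }
      exists (add b x). split; [apply (ing_idem _ _ A _ _ Ib)|split].
      - exists (Nat.pred n). exact Ib.
      - unfold b, nsum in E3. rewrite ntimes_mul_r, ntimes_idem in E3; auto.
        apply idem_mul_r; auto. apply (ing_idem _ _ A _ _ Ib). }
    set (o := fun a => proj1_sig (constructive_indefinite_description _ (Ex a))).
    assert (Ho : forall a, add (o a) (o a) = o a /\ (exists k, ing add (o a) (ntimes add k a)) /\ mul a (o a) = o a).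
    { intros a. unfold o. destruct (constructive_indefinite_description _ (Ex a)) as [g Hg]. exact Hg. }
    split.
    + apply (blat S add mul A M Dl Dr o); auto; apply Ho.
    + intros e f He Hf. apply (clo S add A Hlr); auto.
Qed.
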